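(* Let $p>2$ be prime, let $\mathcal{C}$ be a $\mathbb{Z}_p\mathbb{Z}_{p^2}$-additive code of type $(\alpha,\beta;\gamma,\delta;\kappa)$ with generator matrix $\mathcal{G}$, and let $C=\Phi(\mathcal{C})$ with $\ker(C)=\gamma+2\delta-\bar k$, where $\bar k\in\{1,2,\ldots,\delta\}$. Then there exists a set $\{\mathbf{v}_1,\ldots,\mathbf{v}_{\bar k}\}$ of rows of order $p^2$ in $\mathcal{G}$ with $\Phi(\mathbf{v}_i)\notin K(C)$ such that $$C=\bigcup_{a_1,\ldots,a_{\bar k}\in\mathbb{Z}_p}\left(K(C)+\Phi\left(\sum_{i=1}^{\bar k}a_i\mathbf{v}_i\right)\right).$$
   Context: A $\mathbb{Z}_p\mathbb{Z}_{p^2}$-additive code $\mathcal{C}$ is a subgroup of $\mathbb{Z}_p^\alpha\times\mathbb{Z}_{p^2}^\beta$; as a group $\mathcal{C}\cong\mathbb{Z}_p^\gamma\times\mathbb{Z}_{p^2}^\delta$, and if $\kappa$ is the $\mathbb{Z}_p$-dimension of the projection onto the first $\alpha$ coordinates of the subcode of codewords of order dividing $p$, $\mathcal{C}$ has type $(\alpha,\beta;\gamma,\delta;\kappa)$. A generator matrix $\mathcal{G}$ has rows $\mathbf{u}_1,\ldots,\mathbf{u}_\gamma$ of order $p$ and rows of order $p^2$, $\delta$ in number, such that every codeword is uniquely $\sum\lambda_i\mathbf{u}_i+\sum\nu_j\mathbf{v}_j$ ($\lambda_i\in\mathbb{Z}_p$, $\nu_j\in\mathbb{Z}_{p^2}$).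 The Gray map is $\phi(\theta)=\theta''(1,\ldots,1)+\theta'(0,1,\ldots,p-1)$ for $\theta=\theta''p+\theta'\in\mathbb{Z}_{p^2}$, $\theta',\theta''\in\{0,\ldots,p-1\}$, and $\Phi(\mathbf{x},\mathbf{y})=(\mathbf{x},\phi(y_1),\ldots,\phi(y_\beta))$. The kernel of $C\subseteq\mathbb{Z}_p^n$ is $K(C)=\{\mathbf{x}\in\mathbb{Z}_p^n\mid C+\mathbf{x}=C\}$, a $\mathbb{Z}_p$-linear space, and $\ker(C)$ is its dimension. Elements $a_i\in\mathbb{Z}_p$ are identified with integers in $\{0,\ldots,p-1\}$ when multiplying vectors. *)

(* Defs.v *)
From HB Require Import structures.
From mathcomp Require Import all_boot all_order all_algebra.
Set Implicit Arguments. Unset Strict Implicit. Unset Printing Implicit Defensive.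
Import Order.TTheory GRing.Theory Num.Theory.
Local Open Scope ring_scope.

Definition amb (p a b : nat) : finType :=
  ('rV['F_p]_a * 'rV['Z_(p ^ 2)]_b)%type.

Definition aadd p a b (x y : amb p a b) : amb p a b := (x.1 + y.1, x.2 + y.2).
Definition aopp p a b (x : amb p a b) : amb p a b := (- x.1, - x.2).
Definition azero p a b : amb p a b := (0, 0).
Definition anat p a b (x : amb p a b) (n : nat) : amb p a b := (x.1 *+ n, x.2 *+ n).

Definition add_order p a b (x : amb p a b) (n : nat) : Prop :=
  (0 < n)%N /\ anat x n = azero p a b /\
  (forall m, (0 < m)%N -> (m < n)%N -> anat x m <> azero p a b).

Definition additive_code p a b (C : {set amb p a b}) : Prop :=
  azero p a b \in C /\ (forall x y, x \in C -> y \in C -> aadd x (aopp y) \in C).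

Definition gen_comb p a b g d (u : 'I_g -> amb p a b) (v : 'I_d -> amb p a b)
  (lam : {ffun 'I_g -> 'F_p}) (nu : {ffun 'I_d -> 'Z_(p ^ 2)}) : amb p a b :=
  aadd (\big[@aadd p a b/azero p a b]_(i < g) anat (u i) (val (lam i)))
       (\big[@aadd p a b/azero p a b]_(j < d) anat (v j) (val (nu j))).

Definition generator_matrix p a b (C : {set amb p a b}) g d
  (u : 'I_g -> amb p a b) (v : 'I_d -> amb p a b) : Prop :=
  (forall i, add_order (u i) p) /\
  (forall j, add_order (v j) (p ^ 2)) /\
  (forall c, c \in C <-> exists lam nu, c = gen_comb u v lam nu) /\
  (forall l1 n1 l2 n2, gen_comb u v l1 n1 = gen_comb u v l2 n2 -> l1 = l2 /\ n1 = n2).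

(* kappa: Z_p-dimension of the projection on the first alpha coordinates of the
   subcode of codewords of order dividing p (dimension of an F_p-space S
   is log_p |S|). *)
Definition kappa_of p a b (C : {set amb p a b}) : nat :=
  logn p #|[set c.1 | c in [set c in C | anat c p == azero p a b]]|.

(* Gray map phi : Z_{p^2} -> Z_p^p,
   phi(theta)_k = theta'' + theta' * k  with theta = theta'' p + theta'. *)
Definition gray (p : nat) (t : 'Z_(p ^ 2)) : 'rV['F_p]_p :=
  \row_(k < p) (((val t) %/ p + ((val t) %% p) * k)%N)%:R.

Definition Phi p a b (c : amb p a b) : 'rV['F_p]_(a + b * p) :=
  row_mx c.1 (mxvec (\matrix_(j < b, k < p) @gray p (c.2 0 j) 0 k)).

Definition Phi_set p a b (C : {set amb p a b}) : {set 'rV['F_p]_(a + b * p)} :=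
  [set Phi c | c in C].

Definition kernel n p (C : {set 'rV['F_p]_n}) : {set 'rV['F_p]_n} :=
  [set x | [set c + x | c in C] == C].

Definition ker_dim n p (C : {set 'rV['F_p]_n}) : nat := logn p #|kernel C|.

(* Main.v *)
Require Import Defs.
From HB Require Import structures.
From mathcomp Require Import all_boot all_order all_algebra.
From mathcomp Require Import zify.
Import Order.TTheory GRing.Theory Num.Theory.
Local Open Scope ring_scope.

Lemma p2gt1 p : (1 < p)%N -> (1 < p ^ 2)%N.
Proof. by move=> p1; rewrite (ltn_exp2l 0 2 p1). Qed.

Lemma valZ p (x : 'Z_(p ^ 2)) : (1 < p)%N -> (val x < p ^ 2)%N.
Proof.
move=> p1; apply: leq_trans (ltn_ord x) _; by rewrite Zp_cast ?p2gt1.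
Qed.

Lemma valZ_add p (x y : 'Z_(p ^ 2)) : (1 < p)%N ->
  val (x + y) = ((val x + val y) %% p ^ 2)%N.
Proof.
move=> p1; rewrite /=; congr (_ %% _)%N; apply: Zp_cast; exact: p2gt1.
Qed.

Lemma valZ_nat p (x : 'Z_(p ^ 2)) n : (1 < p)%N ->
  val (x *+ n) = ((val x * n) %% p ^ 2)%N.
Proof.
move=> p1; rewrite Zp_mulrn /=; congr (_ %% _)%N; apply: Zp_cast; exact: p2gt1.
Qed.

Lemma Fp_val p (c : 'F_p) : prime p -> c = (val c)%:R.
Proof.
move=> pp; apply: val_inj; rewrite /= val_Fp_nat // modn_small //.
apply: leq_trans (ltn_ord c) _; by rewrite Fp_cast.
Qed.
From mathcomp Require Import ring.

Lemma nat_h1 p t w : (0 < p)%N -> (w %% p = 0)%N ->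
  (((t + w) %% p ^ 2) %% p = t %% p)%N.
Proof.
move=> p0 hw; rewrite modn_dvdm; last by rewrite dvdn_exp.
by rewrite -modnDmr hw addn0.
Qed.

Lemma nat_h2 p t w : (0 < p)%N -> (w %% p = 0)%N ->
  ((((t + w) %% p ^ 2) %/ p) %% p = (t %/ p + w %/ p) %% p)%N.
Proof.
move=> p0 hw.
have e1 : ((t + w) %/ p = (t + w) %/ p ^ 2 * p + ((t + w) %% p ^ 2) %/ p)%N.
  by rewrite {1}(divn_eq (t + w) (p ^ 2)) -divnMDl // -mulnA.
have e2 : ((t + w) %/ p = w %/ p + t %/ p)%N.
  by rewrite {1}(divn_eq w p) hw addn0 addnC divnMDl.
rewrite -(modnMDl ((t + w) %/ p ^ 2)) -e1 e2 addnC //.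
Qed.

Lemma Fp_natE p m n0 : prime p -> (m %% p = n0 %% p)%N -> (m%:R : 'F_p) = n0%:R.
Proof. by move=> pp e; rewrite -(Fp_nat_mod pp m) e Fp_nat_mod. Qed.

Lemma gray_add p (t w : 'Z_(p ^ 2)) : prime p -> (val w %% p = 0)%N ->
  gray (t + w) = gray t + gray w.
Proof.
move=> pp hw; have p1 := prime_gt1 pp; have p0 := prime_gt0 pp.
apply/rowP => k; rewrite !mxE valZ_add //.
rewrite !natrD !natrM hw mul0r addr0.
rewrite (@Fp_natE p _ _ pp (nat_h2 _ _ _ p0 hw)).
have h : ((((val t + val w) %% p ^ 2) %% p)%N%:R : 'F_p) = (val t %% p)%N%:R.
  by apply: Fp_natE => //; rewrite !modn_mod (nat_h1 _ _ _ p0 hw).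
rewrite h natrD; ring.
Qed.

Definition rho p a b (c : amb p a b) : 'rV['F_p]_b :=
  \row_j ((val (c.2 0 j))%:R : 'F_p).
Arguments rho {p a b}.

Definition Rm p a b (k0 k1 : 'I_p) (w : 'rV['F_p]_(a + b * p)) : 'rV['F_p]_b :=
  \row_j (w 0 (rshift a (mxvec_index j k1)) - w 0 (rshift a (mxvec_index j k0))).
Arguments Rm {p a b}.

Lemma Rm_add p a b k0 k1 (w1 w2 : 'rV['F_p]_(a + b * p)) :
  Rm k0 k1 (w1 + w2) = Rm k0 k1 w1 + Rm k0 k1 w2.
Proof. apply/rowP => j; rewrite !mxE; ring. Qed.

Lemma Rm_opp p a b k0 k1 (w : 'rV['F_p]_(a + b * p)) :
  Rm k0 k1 (- w) = - Rm k0 k1 w.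
Proof. apply/rowP => j; rewrite !mxE; ring. Qed.

Lemma Rm_Phi p a b (k0 k1 : 'I_p) (c : amb p a b) : prime p ->
  val k0 = 0%N -> val k1 = 1%N -> Rm k0 k1 (Phi c) = rho c.
Proof.
move=> pp e0 e1; apply/rowP => j; rewrite /Rm /rho [LHS]mxE [RHS]mxE /Phi !row_mxEr !mxvecE !mxE e0 e1.
rewrite muln0 addn0 muln1 natrD addrAC subrr add0r.
by rewrite Fp_nat_mod.
Qed.

Lemma rho_add p a b (x y : amb p a b) : prime p ->
  rho (aadd x y) = rho x + rho y.
Proof.
move=> pp; apply/rowP => j; rewrite !mxE valZ_add ?prime_gt1 // -natrD.
apply: Fp_natE => //; rewrite modn_dvdm //; exact: dvdn_exp.
Qed.

Lemma rho_zero p a b : rho (azero p a b) = 0.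
Proof. by apply/rowP => j; rewrite !mxE. Qed.

Lemma anatS p a b (x : amb p a b) n : anat x n.+1 = aadd x (anat x n).
Proof. by rewrite /anat /aadd !mulrS. Qed.

Lemma anat0 p a b (x : amb p a b) : anat x 0 = azero p a b.
Proof. by rewrite /anat /azero !mulr0n. Qed.

Lemma rho_nat p a b (x : amb p a b) n : prime p -> rho (anat x n) = rho x *+ n.
Proof.
move=> pp; elim: n => [|n IH]; first by rewrite anat0 rho_zero mulr0n.
by rewrite anatS rho_add // IH mulrS.
Qed.

Lemma rho0P p a b (z : amb p a b) : prime p -> rho z = 0 ->
  forall j, (val (z.2 0%R j) %% p)%N = 0%N.
Proof.
move=> pp h j; have := congr1 (fun r : 'rV['F_p]_b => val (r 0 j)) h.
by rewrite /= !mxE val_Fp_nat.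
Qed.

Lemma Phi_add p a b (x z : amb p a b) : prime p -> rho z = 0 ->
  Phi (aadd x z) = Phi x + Phi z.
Proof.
move=> pp hz; rewrite /Phi add_row_mx -linearD /=; congr (row_mx _ (mxvec _)).
apply/matrixP => j k; rewrite !mxE.
have := gray_add _ (x.2 0 j) (z.2 0 j) pp (rho0P _ _ _ _ pp hz j).
by move/rowP/(_ k); rewrite !mxE.
Qed.

Lemma Phi_zero p a b : Phi (azero p a b) = 0.
Proof.
rewrite /Phi /azero /= -row_mx0; congr row_mx.
apply/rowP => i; case/mxvec_indexP: i => j k.
by rewrite mxvecE !mxE div0n mod0n.
Qed.

Lemma Fp_nat_inj p m n : prime p -> (m < p)%N -> (n < p)%N ->
  (m%:R : 'F_p) = n%:R -> m = n.
Proof.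
move=> pp hm hn /(congr1 val); rewrite /= !val_Fp_nat // !modn_small //.
Qed.

Lemma gray_inj p (t w : 'Z_(p ^ 2)) : prime p -> gray t = gray w -> t = w.
Proof.
move=> pp h; have p1 := prime_gt1 pp; have p0 := prime_gt0 pp.
have h0 := congr1 (fun r : 'rV['F_p]_p => r 0 (Ordinal p0)) h.
have h1 := congr1 (fun r : 'rV['F_p]_p => r 0 (Ordinal p1)) h.
move: h0 h1; rewrite /= !mxE !muln0 !addn0 !muln1 !natrD => h0.
rewrite h0 => /addrI h1.
have lq : forall x : 'Z_(p ^ 2), (val x %/ p < p)%N.
  move=> x; rewrite ltn_divLR // mulnn; exact: valZ.
have e0 := Fp_nat_inj _ _ _ pp (lq t) (lq w) h0.
have e1 := Fp_nat_inj _ _ _ pp (ltn_pmod _ p0) (ltn_pmod _ p0) h1.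
by apply: val_inj; rewrite /= (divn_eq (val t) p) (divn_eq (val w) p) e0 e1.
Qed.

Lemma Phi_inj p a b (x y : amb p a b) : prime p -> Phi x = Phi y -> x = y.
Proof.
move=> pp /eq_row_mx [h1 /(can_inj (@mxvecK _ _ _)) h2].
case: x y h1 h2 => [x1 x2] [y1 y2] /= -> h2; congr pair.
apply/rowP => j.
apply: (gray_inj _ _ _ pp); apply/rowP => k.
have := congr1 (fun M : 'M['F_p]_(b, p) => M j k) h2; by rewrite /= !mxE.
Qed.

Set Implicit Arguments. Unset Strict Implicit.

Lemma aaddC p a b (x y : amb p a b) : aadd x y = aadd y x.
Proof. by rewrite /aadd; congr pair; apply: addrC. Qed.

Lemma aaddA p a b (x y z : amb p a b) : aadd x (aadd y z) = aadd (aadd x y) z.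
Proof. by rewrite /aadd; congr pair; apply: addrA. Qed.

Lemma aadd_sub p a b (x y : amb p a b) : aadd y (aadd x (aopp y)) = x.
Proof. by case: x => x1 x2; rewrite /aadd /aopp /=; congr pair; rewrite addrCA subrr addr0. Qed.

Lemma aopp_sub p a b (y : amb p a b) : aopp (aadd (azero p a b) (aopp y)) = y.
Proof. by case: y => y1 y2; rewrite /aadd /aopp /azero /=; congr pair; rewrite add0r opprK. Qed.

Lemma code_sub p a b (C : {set amb p a b}) x y : additive_code C ->
  x \in C -> y \in C -> aadd x (aopp y) \in C.
Proof. by case=> _ h; apply: h. Qed.

Lemma code_add p a b (C : {set amb p a b}) x y : additive_code C ->
  x \in C -> y \in C -> aadd x y \in C.
Proof.
move=> hC hx hy; rewrite -(aopp_sub y); apply: code_sub => //.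
by apply: code_sub => //; case: hC.
Qed.

Lemma code_nat p a b (C : {set amb p a b}) x n : additive_code C ->
  x \in C -> anat x n \in C.
Proof.
move=> hC hx; elim: n => [|n IH]; first by rewrite anat0; case: hC.
by rewrite anatS; apply: code_add.
Qed.

Lemma code_big p a b (C : {set amb p a b}) n (F : 'I_n -> amb p a b) :
  additive_code C -> (forall i, F i \in C) ->
  \big[@aadd p a b/azero p a b]_(i < n) F i \in C.
Proof.
move=> hC hF; apply: (big_ind (fun x => x \in C)) => //; first by case: hC.
by move=> x y; apply: code_add.
Qed.

Lemma kerC n p (C : {set 'rV['F_p]_n}) k c : k \in kernel C -> c \in C -> c + k \in C.
Proof.
by rewrite inE => /eqP {2}<- hc; apply/imsetP; exists c.
Qed.

Lemma memK n p (C : {set 'rV['F_p]_n}) k : (forall c, c \in C -> c + k \in C) ->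
  k \in kernel C.
Proof.
move=> h; rewrite inE eqEcard card_imset; last exact: addIr.
rewrite leqnn andbT; apply/subsetP => x /imsetP [c hc ->]; exact: h.
Qed.

Lemma ker_add n p (C : {set 'rV['F_p]_n}) k1 k2 : k1 \in kernel C -> k2 \in kernel C ->
  k1 + k2 \in kernel C.
Proof.
by move=> h1 h2; apply: memK => c hc; rewrite addrA; apply: kerC => //; apply: kerC.
Qed.

Lemma ker_opp n p (C : {set 'rV['F_p]_n}) k : k \in kernel C -> - k \in kernel C.
Proof.
move=> h; apply: memK => c hc.
move: h; rewrite inE => /eqP E; move: hc; rewrite -{1}E => /imsetP [d hd ->].
by rewrite addrK.
Qed.

Lemma ker_sub n p (C : {set 'rV['F_p]_n}) k : 0 \in C -> k \in kernel C -> k \in C.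
Proof. by move=> h0 hk; rewrite -[k]add0r; apply: kerC. Qed.

Lemma aadd_sum p a b n (F : 'I_n -> amb p a b) :
  \big[@aadd p a b/azero p a b]_(i < n) F i =
  (\sum_(i < n) (F i : ('rV['F_p]_a * 'rV['Z_(p ^ 2)]_b)%type)).
Proof. reflexivity. Qed.

Lemma anat_nat p a b (x : amb p a b) n :
  anat x n = ((x : ('rV['F_p]_a * 'rV['Z_(p ^ 2)]_b)%type) *+ n).
Proof.
elim: n => [|n IH]; first reflexivity.
rewrite mulrS -IH /anat /= !mulrS; reflexivity.
Qed.

Lemma rho_sum p a b n (F : 'I_n -> amb p a b) : prime p ->
  rho (\big[@aadd p a b/azero p a b]_(i < n) F i) = \sum_(i < n) rho (F i).
Proof.
move=> pp; apply: (big_morph rho (fun x y => rho_add _ _ _ x y pp) (rho_zero p a b)).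
Qed.

Lemma aux_div p m : (0 < p)%N -> ((m * p) %% p ^ 2 = 0)%N -> (m %% p = 0)%N.
Proof.
move=> p0 /eqP; rewrite -/(dvdn _ _) -mulnn dvdn_pmul2r // => /eqP; done.
Qed.

Lemma rho_order_p p a b (x : amb p a b) : prime p -> add_order x p -> rho x = 0.
Proof.
move=> pp [_ [h _]]; apply/rowP => j; rewrite !mxE.
have := congr1 (fun q : amb p a b => val ((q.2 : 'rV['Z_(p ^ 2)]_b) 0 j)) h.
rewrite /anat /azero /= mulmxnE mxE valZ_nat ?prime_gt1 // => /(aux_div (prime_gt0 pp)) hd.
by apply/val_inj; rewrite /= val_Fp_nat // hd.
Qed.
Lemma core (F : fieldType) d n m (M : 'M[F]_(d,n)) (T : 'M[F]_(m,n)) :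
  exists r (s : 'I_r -> 'I_d), injective s /\
   (forall a : 'rV_r, (a *m rowsub s M <= T)%MS -> a = 0) /\
   (forall b : 'rV_d, exists a : 'rV_r, (b *m M - a *m rowsub s M <= T)%MS).
Proof.
set Q := M *m cokermx T.
exists (\rank Q), (maxrankfun Q); split; first exact: maxrankfun_inj.
have E : rowsub (maxrankfun Q) M *m cokermx T = rowsub (maxrankfun Q) Q.
  by rewrite mul_rowsub_mx.
split.
  move=> a; rewrite submxE -mulmxA E => /eqP H.
  apply: (row_free_inj (maxrowsub_free Q)); by rewrite /= H mul0mx.
move=> b.
have : (b *m Q <= rowsub (maxrankfun Q) Q)%MS.
  by rewrite (eq_maxrowsub Q) submxMl.
case/submxP=> a Ha; exists a.
by rewrite submxE mulmxBl -!mulmxA E -/Q Ha subrr.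
Qed.

Set Implicit Arguments. Unset Strict Implicit.

Lemma valZ_b p (c : bool) : (1 < p)%N -> val ((c : nat)%:R : 'Z_(p ^ 2)) = c.
Proof.
move=> p1; rewrite -[RHS](@modn_small c (p ^ 2)); first exact: (val_Zp_nat (p2gt1 _ p1) c).
have := p2gt1 _ p1; case: c => //= h; exact: ltn_trans h.
Qed.

Lemma v_in p a b (C : {set amb p a b}) g d (u : 'I_g -> amb p a b) (v : 'I_d -> amb p a b) :
  prime p -> generator_matrix C u v -> forall j, v j \in C.
Proof.
move=> pp [_ [_ [hgen _]]] j; apply/hgen.
exists [ffun => 0], [ffun j' => ((j' == j) : nat)%:R].
rewrite /gen_comb !aadd_sum.
under eq_bigr do rewrite anat_nat ffunE /= mulr0n.
under [X in _ = aadd _ X]eq_bigr do rewrite anat_nat ffunE valZ_b ?prime_gt1 //.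
rewrite big1 // (bigD1 j) //= eqxx big1 /=.
  by rewrite /aadd /= !add0r !addr0; case: (v j).
by move=> i /negPf ->.
Qed.

Lemma card_code p a b (C : {set amb p a b}) g d (u : 'I_g -> amb p a b) (v : 'I_d -> amb p a b) :
  prime p -> generator_matrix C u v -> #|C| = (p ^ (g + 2 * d))%N.
Proof.
move=> pp [_ [_ [hgen huniq]]].
have -> : C = [set gen_comb u v q.1 q.2 | q in [set: {ffun 'I_g -> 'F_p} * {ffun 'I_d -> 'Z_(p ^ 2)}]].
  apply/setP => c; apply/idP/imsetP.
    by case/hgen => lam [nu ->]; exists (lam, nu).
  by case=> [[lam nu]] _ ->; apply/hgen; exists lam, nu.
rewrite card_in_imset; last first.
  by move=> [l1 n1] [l2 n2] _ _ /= /huniq [-> ->].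
rewrite cardsT card_prod !card_ffun card_Fp // !card_ord Zp_cast ?p2gt1 ?prime_gt1 //.
by rewrite expnD expnM.
Qed.

Lemma aaddN p a b (y : amb p a b) : aadd y (aopp y) = azero p a b.
Proof. by rewrite /aadd /aopp /azero; congr pair; apply: subrr. Qed.

Lemma rho_opp p a b (y : amb p a b) : prime p -> rho (aopp y) = - rho y.
Proof.
move=> pp; apply/eqP; rewrite -addr_eq0 addrC -rho_add // aaddN.
by rewrite rho_zero.
Qed.

Unset Implicit Arguments. Set Strict Implicit.

Theorem proposition11 (p : nat) (pp : prime p) (p_gt2 : (2 < p)%N)
  (alpha beta gamma delta kappa : nat) (Cc : {set amb p alpha beta})
  (u : 'I_gamma -> amb p alpha beta) (v : 'I_delta -> amb p alpha beta)
  (kb : nat) :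
  additive_code Cc ->
  generator_matrix Cc u v ->
  kappa = kappa_of Cc ->
  (1 <= kb <= delta)%N ->
  ker_dim (Phi_set Cc) = (gamma + 2 * delta - kb)%N ->
  exists s : 'I_kb -> 'I_delta,
    injective s /\
    (forall i, Phi (v (s i)) \notin kernel (Phi_set Cc)) /\
    Phi_set Cc =
      \bigcup_(a : {ffun 'I_kb -> 'F_p})
        [set z + Phi (\big[@aadd p alpha beta/azero p alpha beta]_(i < kb)
                         anat (v (s i)) (val (a i))) | z in kernel (Phi_set Cc)].
Proof.
move=> hC hG _ hkb hker.
have p1 := prime_gt1 pp; have p0 := prime_gt0 pp.
have hG' := hG; case: hG' => hu [hv [hgen huniq]].
set C := Phi_set Cc; set K := kernel C.
pose k0 : 'I_p := Ordinal p0; pose k1 : 'I_p := Ordinal p1.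
have RPhi c : Rm k0 k1 (Phi c) = rho c by apply: Rm_Phi.
have memC x : x \in Cc -> Phi x \in C by move=> hx; apply: imset_f.
have K0 : 0 \in K by apply: memK => c hc; rewrite addr0.
have KP z : z \in Cc -> rho z = 0 -> Phi z \in K.
  move=> hz hr; apply: memK => c /imsetP [x hx ->].
  rewrite -(Phi_add _ _ _ _ _ pp hr); apply: memC; exact: code_add.
have G x y : x \in Cc -> y \in Cc -> rho x = rho y -> Phi x - Phi y \in K.
  move=> hx hy e.
  have hz : aadd x (aopp y) \in Cc by apply: code_sub.
  have rz : rho (aadd x (aopp y)) = 0 by rewrite rho_add // rho_opp // e subrr.
  rewrite -{1}(aadd_sub x y) (Phi_add _ _ _ _ _ pp rz) addrC addKr.
  exact: KP.
have H x y : x \in Cc -> y \in Cc ->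
    rho x - rho y \in [set Rm k0 k1 k | k in K] -> Phi x - Phi y \in K.
  move=> hx hy /imsetP [k hk e].
  have : Phi y + k \in C by apply: kerC => //; apply: memC.
  case/imsetP => w hw ew.
  have rw : rho w = rho x by rewrite -RPhi -ew Rm_add RPhi -e addrC subrK.
  have hxw := G x w hx hw (esym rw).
  have -> : Phi x - Phi y = (Phi x - Phi w) + k by rewrite -ew opprD addrA subrK.
  exact: ker_add.
set TK := [set Rm k0 k1 k | k in K].
have TK0 : 0 \in TK.
  by apply/imsetP; exists 0 => //; apply/rowP => j; rewrite !mxE subrr.
have TKD t1 t2 : t1 \in TK -> t2 \in TK -> t1 + t2 \in TK.
  move=> /imsetP [q1 h1 ->] /imsetP [q2 h2 ->]; apply/imsetP; exists (q1 + q2).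
    exact: ker_add.
  by rewrite Rm_add.
have TKZ (c : 'F_p) t : t \in TK -> c *: t \in TK.
  move=> ht; rewrite (Fp_val _ c pp) scaler_nat; elim: (val c) => [|n IH].
    by rewrite mulr0n.
  by rewrite mulrS; apply: TKD.
pose MT := \matrix_(i < #|TK|) (enum_val i : 'rV['F_p]_beta).
have MT1 t : t \in TK -> (t <= MT)%MS.
  by move=> ht; apply: (eq_row_sub (enum_rank_in ht t)); rewrite rowK enum_rankK_in.
have MT2 t : (t <= MT)%MS -> t \in TK.
  case/submxP => D ->; rewrite mulmx_sum_row.
  apply: (big_ind (fun x => x \in TK)) => // i _; apply: TKZ.
  rewrite rowK; exact: enum_valP.
pose Mr := \matrix_(j < delta) rho (v j).
have [r [s [sinj [indep span]]]] := core Mr MT.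
pose y (a : {ffun 'I_r -> 'F_p}) :=
  \big[@aadd p alpha beta/azero p alpha beta]_(i < r) anat (v (s i)) (val (a i)).
have vC j : v j \in Cc := v_in pp hG j.
have yC a : y a \in Cc by apply: code_big => // i; apply: code_nat.
have ry a : rho (y a) = (\row_i a i) *m rowsub s Mr.
  rewrite rho_sum // mulmx_sum_row; apply: eq_bigr => i _.
  rewrite rho_nat // -scaler_nat -(Fp_val _ _ pp) mxE; congr (_ *: _).
  by apply/rowP => j; rewrite !mxE.
have dist a a' : Phi (y a) - Phi (y a') \in K -> a = a'.
  move=> h.
  have : ((\row_i a i - \row_i a' i) *m rowsub s Mr <= MT)%MS.
    apply: MT1; apply/imsetP; exists (Phi (y a) - Phi (y a')) => //.
    by rewrite Rm_add Rm_opp !RPhi !ry mulmxBl.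
  move/indep/eqP; rewrite subr_eq0 => /eqP e.
  apply/ffunP => i; have := congr1 (fun m : 'rV['F_p]_r => m 0 i) e; by rewrite !mxE.
have cover c : c \in C -> exists a, exists2 z, z \in K & c = z + Phi (y a).
  case/imsetP => x hx ->.
  have [lam [nu ex]] := (hgen x).1 hx.
  have rx : rho x = (\row_j ((val (nu j))%:R : 'F_p)) *m Mr.
    rewrite ex /gen_comb rho_add // !rho_sum // big1 ?add0r; last first.
      by move=> i _; rewrite rho_nat // (rho_order_p pp (hu i)) mul0rn.
    rewrite mulmx_sum_row; apply: eq_bigr => j _.
    by rewrite rho_nat // -scaler_nat rowK mxE.
  have [a' ha'] := span (\row_j ((val (nu j))%:R : 'F_p)).
  exists [ffun i => a' 0 i].
  have ea : \row_i [ffun i => a' 0 i] i = a' by apply/rowP => i; rewrite !mxE ffunE.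
  exists (Phi x - Phi (y [ffun i => a' 0 i])); last by rewrite subrK.
  apply: H => //; apply: MT2; rewrite ry ea rx; exact: ha'.
have eqC : C = \bigcup_(a : {ffun 'I_r -> 'F_p}) [set z + Phi (y a) | z in K].
  apply/setP => c; apply/idP/bigcupP.
    move=> hc; have [a [z hz ->]] := cover c hc; exists a => //.
    by apply/imsetP; exists z.
  case=> a _ /imsetP [z hz ->]; rewrite addrC; apply: kerC => //; exact: memC.
have cardC : #|C| = (p ^ r * #|K|)%N.
  have -> : C = [set q.2 + Phi (y q.1) | q in setX [set: {ffun 'I_r -> 'F_p}] K].
    apply/setP => c; apply/idP/imsetP.
      move=> hc; have [a [z hz ->]] := cover c hc; exists (a, z) => //.
      by rewrite in_setX in_setT hz.
    case=> [[a z]]; rewrite in_setX => /andP [_ hz] ->; rewrite addrC.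
    apply: kerC => //; exact: memC.
  rewrite card_in_imset; first by rewrite cardsX cardsT card_ffun card_Fp // card_ord.
  move=> [a z] [a' z'] /=; rewrite !in_setX => /andP [_ hz] /andP [_ hz'] e.
  have ea : a = a'.
    apply: dist.
    have -> : Phi (y a) = z' + Phi (y a') - z by rewrite -e addrAC subrr add0r.
    rewrite addrAC addrK; apply: ker_add => //; exact: ker_opp.
  by subst a'; move/addIr: e => ->.
have cardC' : #|C| = (p ^ (gamma + 2 * delta))%N.
  rewrite card_in_imset; first exact: card_code hG.
  by move=> x x' _ _; apply: Phi_inj.
have er : r = kb.
  have Kpos : (0 < #|K|)%N by apply/card_gt0P; exists 0.
  have hr : (r <= gamma + 2 * delta)%N.
    have : (p ^ r %| p ^ (gamma + 2 * delta))%N by rewrite -cardC' cardC dvdn_mulr.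
    by rewrite dvdn_Pexp2l.
  have eK : #|K| = (p ^ (gamma + 2 * delta - r))%N.
    have pr0 : (0 < p ^ r)%N by rewrite expn_gt0 p0.
    apply/eqP; rewrite -(eqn_pmul2l pr0) -cardC cardC' -expnD subnKC //.
  move: hker; rewrite /ker_dim -/C -/K eK pfactorK //; case/andP: hkb => _ hkb2.
  lia.
subst r.
exists s; split => //; split; last exact: eqC.
move=> i; apply/negP => hk.
have : ((delta_mx 0 i : 'rV['F_p]_kb) *m rowsub s Mr <= MT)%MS.
  apply: MT1; apply/imsetP; exists (Phi (v (s i))) => //.
  by rewrite RPhi -rowE; apply/rowP => j; rewrite !mxE.
move/indep => /matrixP /(_ 0 i); rewrite !mxE !eqxx /= => /eqP.
by rewrite oner_eq0.
Qed.
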